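(* Let $R$ be a commutative Noetherian ring with unity. The vertex set of $\Gamma_E(R)$ is infinite if and only if there exists $x\in R$ such that $\operatorname{ann}(x)$ is a maximal element of $\mathfrak F=\{\operatorname{ann}(z)\mid 0\neq z\in R\}$ (so $\operatorname{ann}(x)$ is an associated prime of $R$) and $\deg[x]=\infty$.
   Context: For $x,y\in R$ write $x\sim y$ iff $\operatorname{ann}(x)=\operatorname{ann}(y)$; $[x]$ denotes the equivalence class of $x$. Let $Z^*(R)$ be the set of nonzero zero divisors of $R$. The graph $\Gamma_E(R)$ is the simple graph whose vertices are the classes $[x]$ with $x\in Z^*(R)$, two distinct vertices $[x],[y]$ being adjacent iff $xy=0$. The degree of a vertex is the number (possibly infinite) of vertices adjacent to it. An associated prime of $R$ is a prime ideal of the form $\operatorname{ann}(y)$, $y\in R$. *)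

(* Defs.v *)
From HB Require Import structures.
From mathcomp Require Import all_boot all_order all_algebra.
From mathcomp Require Import boolp classical_sets cardinality.
Set Implicit Arguments. Unset Strict Implicit. Unset Printing Implicit Defensive.
Import GRing.Theory.
Local Open Scope ring_scope.
Local Open Scope classical_set_scope.

Section Defs.
Variable R : comNzRingType.

Definition is_ideal (I : set R) : Prop :=
  I 0 /\ (forall a b, I a -> I b -> I (a + b)) /\ (forall r a, I a -> I (r * a)).

Definition noetherian : Prop :=
  forall I : nat -> set R, (forall n, is_ideal (I n)) ->
    (forall n, I n `<=` I n.+1) ->
    exists N, forall n, (N <= n)%N -> I n = I N.

Definition ann (x : R) : set R := [set y | x * y = 0].

Definition eclass (x : R) : set R := [set y | ann y = ann x].

Definition Zstar : set R := [set x | x != 0 /\ exists y, y != 0 /\ x * y = 0].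

Definition GE_vertices : set (set R) := [set eclass x | x in Zstar].

Definition GE_adj (V W : set R) : Prop :=
  GE_vertices V /\ GE_vertices W /\ V <> W /\
  exists a b, V = eclass a /\ W = eclass b /\ a * b = 0.

(* the set of neighbours of a vertex; degree is its cardinality *)
Definition GE_nbhd (V : set R) : set (set R) := [set W | GE_adj V W].

Definition annF : set (set R) := [set ann z | z in [set z | z != 0]].

Definition maximal_in_annF (x : R) : Prop :=
  annF (ann x) /\ forall z, z != 0 -> ann x `<=` ann z -> ann z = ann x.

End Defs.

(* Main.v *)
Require Import Defs.
From HB Require Import structures.
From mathcomp Require Import all_boot all_order all_algebra.
From mathcomp Require Import boolp classical_sets functions cardinality.
From Stdlib Require Import Classical.
Import GRing.Theory.
Local Open Scope ring_scope.
Local Open Scope classical_set_scope.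

Section Aux.
Variable R : comNzRingType.

Lemma ann_ideal (x : R) : is_ideal (ann x).
Proof.
rewrite /is_ideal /ann /=; split; first by rewrite mulr0.
split; first by move=> a b ha hb; rewrite mulrDr ha hb addr0.
by move=> r a ha; rewrite mulrCA ha mulr0.
Qed.

Lemma maxF_neq0 (x : R) : maximal_in_annF x -> x != 0.
Proof.
move=> [[z /= hz e] _]; apply/eqP => x0.
move: hz; have : ann x 1 by rewrite /ann /= x0 mul0r.
by rewrite -e /ann /= mulr1 => ->; rewrite eqxx.
Qed.

Lemma maxF_prime (x a b : R) : maximal_in_annF x -> x * (a * b) = 0 ->
  x * a = 0 \/ x * b = 0.
Proof.
move=> [_ hm] h; case: (eqVneq (x * a) 0) => xa; [by left|right].
have sub : ann x `<=` ann (x * a).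
  by move=> y; rewrite /ann /= => hy; rewrite mulrAC hy mul0r.
have e := hm _ xa sub.
have : ann (x * a) b by rewrite /ann /= -mulrA.
by rewrite e.
Qed.

Hypothesis HR : noetherian R.

Lemma exists_max (w : R) : w != 0 ->
  exists x, maximal_in_annF x /\ ann w `<=` ann x.
Proof.
move=> w0; apply: NNPP => H.
have step : forall z : R, exists z' : R, (z != 0 /\ ann w `<=` ann z) ->
   (z' != 0 /\ ann z `<=` ann z' /\ ann z' <> ann z).
  move=> z; case: (classic (z != 0 /\ ann w `<=` ann z)); last first.
    by move=> h; exists 0 => /h.
  move=> [z0 hz].
  have nm : ~ maximal_in_annF z by move=> m; apply: H; exists z.
  have : ~ (forall z', z' != 0 -> ann z `<=` ann z' -> ann z' = ann z).
    by move=> hh; apply: nm; split => //; exists z.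
  move=> /not_all_ex_not [z' hz']; exists z' => _.
  apply: NNPP => hn; apply: hz' => a b; apply: NNPP => d; by apply: hn; split; [|split].
have [f hf] := choice step.
pose s n := iter n f w.
have inv : forall n, s n != 0 /\ ann w `<=` ann (s n).
  elim => [|n [IH1 IH2]]; first by split.
  have [h1 [h2 _]] := hf (s n) (conj IH1 IH2).
  by split => //=; apply: subset_trans h2.
have [N hN] := HR (fun n => ann (s n)) (fun n => ann_ideal (s n))
  (fun n => proj1 (proj2 (hf (s n) (inv n)))).
have [_ [_ h3]] := hf (s N) (inv N).
by apply: h3; exact: (hN N.+1 (leqnSn N)).
Qed.


Lemma finite_max : finite_set [set ann x | x in @maximal_in_annF R].
Proof.
apply: NNPP => /infiniteP /pcard_leP [g].
have gK : forall n, [set ann x | x in @maximal_in_annF R] (g n).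
  by move=> n; exact: funS.
have ginj : forall m n, g m = g n -> m = n.
  by move=> m n h; apply: (@inj _ _ _ g) => //; rewrite ?inE.
have gK' : forall n, exists x, maximal_in_annF x /\ ann x = g n.
  by move=> n; case: (gK n) => x hx e; exists x.
have [xs hxs] := choice gK'.
pose I n : set R := [set a | exists r : nat -> R, a = \sum_(i < n) r i * xs i].
have Iid : forall n, is_ideal (I n).
  move=> n; split; first by exists (fun _ => 0); rewrite big1 // => i _; rewrite mul0r.
  split.
    move=> a b [r1 ->] [r2 ->]; exists (fun i => r1 i + r2 i).
    by rewrite -big_split /=; apply: eq_bigr => i _; rewrite mulrDl.
  move=> c a [r ->]; exists (fun i => c * r i).
  by rewrite mulr_sumr; apply: eq_bigr => i _; rewrite mulrA.
have Iinc : forall n, I n `<=` I n.+1.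
  move=> n a [r ->]; exists (fun i => if (i < n)%N then r i else 0).
  rewrite big_ord_recr /= ltnn mul0r addr0; apply: eq_bigr => i _.
  by rewrite /= ltn_ord.
have [N hN] := HR I Iid Iinc.
have : I N.+1 (xs N).
  exists (fun i => if i == N then 1 else 0).
  rewrite big_ord_recr /= eqxx mul1r big1 ?add0r // => i _.
  by rewrite /= (ltn_eqF (ltn_ord i)) mul0r.
rewrite hN // => -[r er].
have XN0 : xs N != 0 by apply: maxF_neq0; exact: (hxs N).1.
have ach : forall i, exists a : R, (i < N)%N -> xs i * a = 0 /\ xs N * a != 0.
  move=> i; case: (ltnP i N) => hi; last by exists 0.
  have nsub : ~ (ann (xs i) `<=` ann (xs N)).
    move=> sub; have e := (hxs i).1.2 _ XN0 sub.
    have : g N = g i by rewrite -(hxs N).2 -(hxs i).2.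
    by move/ginj => eNi; move: hi; rewrite eNi ltnn.
  have [a ha] : exists a, ~ (ann (xs i) a -> ann (xs N) a).
    by apply: NNPP => hn; apply: nsub => a; apply: NNPP => hh; apply: hn; exists a.
  exists a => _; split.
    by apply: NNPP => hn; apply: ha.
  by apply/eqP => h; apply: ha.
have [a ha] := choice ach.
have pnz : forall k, (k <= N)%N -> xs N * \prod_(j < k) a j != 0.
  elim => [|k IH] hk; first by rewrite big_ord0 mulr1.
  rewrite big_ord_recr /=; apply/eqP => h.
  case: (@maxF_prime (xs N) _ _ (hxs N).1 h) => h'.
    by move: (IH (ltnW hk)); rewrite h' eqxx.
  by move: (ha k hk).2; rewrite h' eqxx.
have pz : forall i, (i < N)%N -> xs i * \prod_(j < N) a j = 0.
  move=> i hi; rewrite (bigD1 (Ordinal hi)) //= mulrA (ha i hi).1 mul0r //.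
move: (pnz N (leqnn N)); rewrite {1}er mulr_suml big1 ?eqxx // => i _.
by rewrite -mulrA pz // mulr0.
Qed.

End Aux.

Theorem proposition2p2 (R : comNzRingType) (HR : noetherian R) :
  ~ finite_set (@GE_vertices R) <->
  exists x : R, maximal_in_annF x /\ ~ finite_set (GE_nbhd (eclass x)).
Proof.
split; last first.
  move=> [x [_ Hinf]] Hfin; apply: Hinf; apply: sub_finite_set Hfin.
  by move=> W [_ [hW _]].
move=> Hinf; apply: NNPP => H; apply: Hinf.
have Hf : forall x : R, maximal_in_annF x -> finite_set (GE_nbhd (eclass x)).
  by move=> x hx; apply: NNPP => hn; apply: H; exists x.
pose E (P : set R) : set (set R) :=
  [set [set y | ann y = P]] `|` GE_nbhd [set y | ann y = P].
apply: (sub_finite_set (B := \bigcup_(P in [set ann x | x in @maximal_in_annF R]) E P)).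
  move=> V [y [y0 [w [w0 yw]]] <-].
  have [x [mx sub]] := @exists_max R HR w w0.
  have xy : x * y = 0 by apply: sub; rewrite /ann /= mulrC.
  exists (ann x); first by exists x.
  case: (classic (eclass y = eclass x)) => e; first by left; rewrite e.
  right; split; first by exists x => //; split; [exact: maxF_neq0|exists y].
  split; first by exists y => //; split => //; exists w.
  by split; [move=> e'; apply: e | exists x, y].
apply: bigcup_finite; first exact: (@finite_max R HR).
move=> P [x mx <-]; rewrite /E finite_setU; split; first exact: finite_set1.
exact: Hf.
Qed.
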